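(* Let $\lambda,\mu$ be partitions with $|\mu|=|\lambda|$ and $d(\lambda,\mu)=2$, and write $S_\lambda\setminus S_\mu=\{\lambda_a-a+\frac12,\lambda_b-b+\frac12\}$ and $S_\mu\setminus S_\lambda=\{\mu_{a'}-a'+\frac12,\mu_{b'}-b'+\frac12\}$ with $1\le a<b$ and $1\le a'<b'$. Then there exist exactly two pairs $(\gamma,\gamma')$ with $\gamma$ a border strip of $\lambda$, $\gamma'$ a border strip of $\mu$ and $\lambda\setminus\gamma=\mu\setminus\gamma'$; denoting them $(\gamma_1,\gamma_1')$ and $(\gamma_2,\gamma_2')$ suitably, they satisfy: (i) $\gamma_1\subset\gamma_2$ and $\gamma_1'\subset\gamma_2'$; (ii) $|\gamma_1|=|\gamma_1'|=|\lambda_a-a-\mu_{a'}+a'|$ and $|\gamma_2|=|\gamma_2'|=|\lambda_a-a-\mu_{b'}+b'|$; (iii) if $\lambda_a-a>\mu_{a'}-a'$, then $\mathrm{ht}(\gamma_1)=a'-a$, $\mathrm{ht}(\gamma_1')=b-b'$, $\mathrm{ht}(\gamma_2)=b'-a-1$, $\mathrm{ht}(\gamma_2')=b-a'$; and if $\lambda_a-a<\mu_{a'}-a'$, then $\mathrm{ht}(\gamma_1)=b'-b$, $\mathrm{ht}(\gamma_1')=a-a'$, $\mathrm{ht}(\gamma_2)=b'-a$, $\mathrm{ht}(\gamma_2')=b-a'-1$.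
   Context: Partitions $\lambda=(\lambda_1\ge\lambda_2\ge\dots)$, with $\lambda_j=0$ beyond the length; $|\lambda|$ is the size, $\lambda'$ the transpose; $S_\lambda=\{\lambda_j-j+\frac12:j\ge1\}$. Modified Frobenius coordinates: if $d$ is the number of $i$ with $\lambda_i\ge i$, $c_i=\lambda_i-i+\frac12$, $c_i^*=-(\lambda'_i-i)-\frac12$, $C_\lambda=\{c_1,\dots,c_d,c_1^*,\dots,c_d^*\}$; Hamming distance $d(\lambda,\mu)=\frac12|C_\lambda\,\Delta\,C_\mu|$ (when $d(\lambda,\mu)=2$ one has $|S_\lambda\setminus S_\mu|=|S_\mu\setminus S_\lambda|=2$, so the indices $a,b,a',b'$ exist). Young diagram $Y_\lambda=\{(x,y):1\le y\le\lambda_x\}$. For partitions $\sigma$ with $Y_\sigma\subset Y_\lambda$, the skew diagram $\gamma=\lambda/\sigma$ is a border strip of $\lambda$ if it is edge-connected and contains no $2\times2$ block; then $\lambda\setminus\gamma:=\sigma$, $|\gamma|$ is the number of cells and $\mathrm{ht}(\gamma)$ is the number of rows it meets minus one. Inclusion $\gamma_1\subset\gamma_2$ is inclusion of sets of cells. *)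

(* Defs.v *)
From HB Require Import structures.
From mathcomp Require Import all_boot all_order all_algebra.
From mathcomp Require Import finmap.
Set Implicit Arguments. Unset Strict Implicit. Unset Printing Implicit Defensive.
Import Order.TTheory GRing.Theory Num.Theory.
Local Open Scope fset_scope.
Local Open Scope ring_scope.

Definition is_partition (s : seq nat) : bool :=
  sorted (fun x y => y <= x)%N s && all (fun x => 0 < x)%N s.

(* lambda_j for j >= 1 (1-indexed); 0 beyond the length. *)
Definition part (s : seq nat) (j : nat) : nat := nth 0 s j.-1.

Definition psize (s : seq nat) : nat := sumn s.

Definition ptrans (s : seq nat) (i : nat) : nat := count (fun x => i <= x)%N s.

Definition inS (s : seq nat) (x : rat) : Prop :=
  exists2 j : nat, (1 <= j)%N & x = (part s j)%:R - j%:R + 1 / 2.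

Definition frob_d (s : seq nat) : nat :=
  count (fun i => i <= part s i)%N (iota 1 (size s)).

Definition frobC (s : seq nat) : seq rat :=
  [seq ((part s i)%:R - i%:R + 1 / 2 : rat) | i <- iota 1 (frob_d s)] ++
  [seq (- ((ptrans s i)%:R - i%:R) - 1 / 2 : rat) | i <- iota 1 (frob_d s)].

Definition hamming (l m : seq nat) : nat :=
  (size [seq x <- undup (frobC l) | x \notin frobC m] +
   size [seq x <- undup (frobC m) | x \notin frobC l])./2.

(* Cells are pairs (x, y) = (row, column), both >= 1. *)
Definition cell := (nat * nat)%type.

Definition young (s : seq nat) : {fset cell} :=
  [fset c in flatten [seq [seq (x, y) | y <- iota 1 (part s x)]
                     | x <- iota 1 (size s)]].

Definition adj (c d : cell) : bool :=
  ((c.1 == d.1) && ((c.2 == d.2.+1) || (d.2 == c.2.+1))) ||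
  ((c.2 == d.2) && ((c.1 == d.1.+1) || (d.1 == c.1.+1))).

Definition edge_connected (g : {fset cell}) : Prop :=
  forall c d, c \in g -> d \in g ->
    exists p : seq cell, [/\ path adj c p, last c p = d & all (fun e => e \in g) p].

Definition has_2x2 (g : {fset cell}) : Prop :=
  exists x y, [/\ (x, y) \in g, (x.+1, y) \in g, (x, y.+1) \in g & (x.+1, y.+1) \in g].

(* border_strip_rem l g s : g is a border strip of l with l \ g = s, i.e.
   s is a partition with Y_s in Y_l, g = Y_l \ Y_s (the skew diagram l/s),
   g nonempty, edge-connected and without 2x2 block. *)
Definition border_strip_rem (l : seq nat) (g : {fset cell}) (s : seq nat) : Prop :=
  [/\ is_partition s, (young s `<=` young l)%fset, g = (young l `\` young s)%fset
    & [/\ g != fset0, edge_connected g & ~ has_2x2 g]].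

Definition ht (g : {fset cell}) : nat := (size (undup [seq c.1 | c <- g])).-1.

(* Main.v *)
Require Import Defs.
From HB Require Import structures.
From mathcomp Require Import all_boot all_order all_algebra.
From mathcomp Require Import finmap.
From mathcomp Require Import zify.
From Stdlib Require Import Classical_Prop.
Import Order.TTheory GRing.Theory Num.Theory.
Set Implicit Arguments. Unset Strict Implicit.

Module M1.

Definition F (s : seq nat) (j : nat) : int := ((part s j)%:Z - j%:Z)%R.
Definition inR s (z : int) : Prop := exists2 j, (1 <= j)%N & F s j = z.

Lemma part_out s j : (size s < j)%N -> part s j = 0%N.
Proof. by case: j => [|j] h; rewrite /part nth_default //=; lia. Qed.

Lemma part_mono s i j : is_partition s -> (i <= j)%N -> (part s j <= part s i)%N.
Proof.
case/andP=> so _ hij; rewrite /part.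
case: (ltnP j.-1 (size s)) => hj; last by rewrite nth_default.
have := @sorted_leq_nth _ (fun x y => y <= x)%N _ _ 0%N s so.
have tr : transitive (fun x y : nat => (y <= x)%N) by move=> a b c h1 h2; exact: leq_trans h2 h1.
move=> /(_ tr (fun x => leqnn x)) H; apply: H; rewrite ?inE //.
- apply: leq_ltn_trans hj; rewrite -!subn1; exact: leq_sub2r.
- rewrite -!subn1; exact: leq_sub2r.
Qed.

Lemma part_pos s j : is_partition s -> (1 <= j <= size s)%N -> (0 < part s j)%N.
Proof.
case/andP=> _ /allP al /andP[hj1 hj]; apply: al; rewrite /part; apply: mem_nth.
case: j hj1 hj => //.
Qed.

Lemma F_lt s i j : is_partition s -> (i < j)%N -> (F s j < F s i)%R.
Proof.
move=> ps hij; have := part_mono ps (ltnW hij); rewrite /F; lia.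
Qed.

Lemma F_le s i j : is_partition s -> (i <= j)%N -> (F s j <= F s i)%R.
Proof.
move=> ps hij; have := part_mono ps hij; rewrite /F; lia.
Qed.

Lemma F_inj s i j : is_partition s -> F s i = F s j -> i = j.
Proof.
move=> ps e; case: (ltngtP i j) => // h.
- by have := F_lt ps h; rewrite e ltxx.
- by have := F_lt ps h; rewrite e ltxx.
Qed.

Lemma F_out s j : (size s < j)%N -> F s j = (- j%:Z)%R.
Proof. by move=> h; rewrite /F part_out // sub0r. Qed.

Lemma part_inj s t : is_partition s -> is_partition t ->
  (forall j, (1 <= j)%N -> part s j = part t j) -> s = t.
Proof.
elim: s t => [|x s IH] [|y t] //=.
- move=> _ /andP[_ /andP[ht _]] h; have := h 1%N isT; rewrite /part /=; lia.
- move=> /andP[_ /andP[hx _]] _ h; have := h 1%N isT; rewrite /part /=; lia.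
move=> ps pt h.
have e : x = y by have := h 1%N isT.
rewrite e; congr (_ :: _); apply: IH.
- case/andP: ps => /= so /andP[_ al]; apply/andP; split => //; exact: path_sorted so.
- case/andP: pt => /= so /andP[_ al]; apply/andP; split => //; exact: path_sorted so.
move=> j hj; have := h j.+1 isT; rewrite /part /=.
by case: j hj.
Qed.

End M1.
Import M1.

Module M2.

Lemma filter_pos_nth (L : seq nat) i : sorted (fun x y => y <= x)%N L ->
  nth 0%N [seq x <- L | (0 < x)%N] i = nth 0%N L i.
Proof.
elim: L i => [|x L IH] i //= so.
have soL : sorted (fun x y => y <= x)%N L := path_sorted so.
case: ifP => hx.
  by case: i => [|i] //=; rewrite IH.
have x0 : x = 0%N by lia.
have allz : all (fun z => z == 0%N) L.
  have tr : transitive (fun x y : nat => (y <= x)%N) by move=> a b c h1 h2; exact: leq_trans h2 h1.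
  move: so; rewrite path_sortedE // => /andP[/allP al _]; apply/allP => z /al; lia.
have -> : [seq x <- L | (0 < x)%N] = [::].
  rewrite (@eq_in_filter _ _ (fun _ => false)); first by elim: (L).
  by move=> z /(allP allz) /eqP ->.
rewrite nth_nil; case: i => [|i] /=; first by rewrite x0.
case: (ltnP i (size L)) => hi; last by rewrite nth_default.
by have := allP allz _ (mem_nth 0%N hi) => /eqP ->.
Qed.

Lemma sorted_map_iota (h : nat -> nat) m n :
  (forall j, (1 <= j)%N -> (h j.+1 <= h j)%N) -> (1 <= m)%N ->
  sorted (fun x y => y <= x)%N [seq h j | j <- iota m n].
Proof.
move=> hd; elim: n m => [|n IH] m hm //=.
case: n IH => [|n] IH //=.
apply/andP; split; first exact: hd.
have := IH m.+1 isT; by [].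
Qed.

Definition mkpart (h : nat -> nat) n := [seq x <- [seq h j | j <- iota 1 n] | (0 < x)%N].

Lemma mkpart_spec (h : nat -> nat) n :
  (forall j, (1 <= j)%N -> (h j.+1 <= h j)%N) -> (forall j, (n < j)%N -> h j = 0%N) ->
  is_partition (mkpart h n) /\ forall j, (1 <= j)%N -> part (mkpart h n) j = h j.
Proof.
move=> hd hz; have so := sorted_map_iota n hd (isT : (1 <= 1)%N).
split.
  apply/andP; split; last by apply/allP => x; rewrite mem_filter => /andP[].
  apply: sorted_filter => //; move=> a b c h1 h2; exact: leq_trans h2 h1.
move=> j hj; rewrite /part /mkpart filter_pos_nth //.
case: (ltnP j.-1 n) => hjn.
  rewrite (nth_map 0%N); last by rewrite size_iota.
  by rewrite nth_iota //; case: j hj hjn.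
rewrite nth_default ?size_map ?size_iota // hz //; case: j hj hjn => //= j; lia.
Qed.

End M2.
Import M2.

Module M3.
Local Open Scope ring_scope.

Definition hS l p q (y : int) j : nat :=
  if (j < p)%N then part l j else if (j < q)%N then (part l j.+1 - 1)%N
  else if j == q then `|(y + q%:Z)%R|%N else part l j.

Definition mkS l p q y := mkpart (hS l p q y) (size l).

Definition valid l p q (y : int) :=
  [/\ (1 <= p)%N, (p <= q)%N, (F l q.+1 < y)%R & (y < F l q)%R].

Lemma valid_facts l p q y : valid l p q y ->
  [/\ (`|(y + q%:Z)%R|%N)%:Z = (y + q%:Z)%R,
      (part l q.+1 <= `|(y + q%:Z)%R|%N)%N,
      (`|(y + q%:Z)%R|%N < part l q)%N & (q <= size l)%N].
Proof.
case=> h1 h2; rewrite /F => h3 h4.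
have e : (`|(y + q%:Z)%R|%N)%:Z = (y + q%:Z)%R by lia.
split => //; try lia.
case: (leqP q (size l)) => // hq; rewrite part_out // in h4; lia.
Qed.

Lemma hS_lt l p q y j : (j < p)%N -> hS l p q y j = part l j.
Proof. by rewrite /hS => ->. Qed.
Lemma hS_mid l p q y j : (p <= j < q)%N -> hS l p q y j = (part l j.+1 - 1)%N.
Proof. by rewrite /hS => /andP[h1 h2]; rewrite ltnNge h1 /= h2. Qed.
Lemma hS_q l p q y : (p <= q)%N -> hS l p q y q = `|(y + q%:Z)%R|%N.
Proof. by rewrite /hS => h; rewrite ltnNge h /= ltnn eqxx. Qed.
Lemma hS_gt l p q y j : (p <= q < j)%N -> hS l p q y j = part l j.
Proof.
rewrite /hS => /andP[h1 h2]; rewrite ltnNge (leq_trans h1 (ltnW h2)) /= ltnNge (ltnW h2) /=.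
by rewrite gtn_eqF.
Qed.

Lemma hS_dec l p q y j : is_partition l -> valid l p q y -> (1 <= j)%N ->
  (hS l p q y j.+1 <= hS l p q y j)%N.
Proof.
move=> pl v j1; have [e1 e2 e3 e4] := valid_facts v; case: v => h1 h2 _ _.
have m1 := part_mono pl (leqnSn j); have m2 := part_mono pl (leqnSn j.+1).
move: e1 e2 e3 e4; set t := `|(y + q%:Z)%R|%N => e1 e2 e3 e4.
case: (ltngtP j.+1 q) => hq.
- case: (ltnP j.+1 p) => hp.
    by rewrite !hS_lt //; lia.
  case: (ltnP j p) => hp'.
    rewrite [hS _ _ _ _ j]hS_lt // [hS _ _ _ _ j.+1]hS_mid; lia.
  rewrite !hS_mid; lia.
- rewrite [hS _ _ _ _ j.+1]hS_gt; last lia.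
  case: (ltngtP j q) => hjq.
  + lia.
  + rewrite hS_gt; lia.
  + subst j; rewrite hS_q; lia.
- subst q; rewrite hS_q //.
  case: (ltnP j p) => hp.
    rewrite [hS _ _ _ _ j]hS_lt //; lia.
  rewrite [hS _ _ _ _ j]hS_mid; lia.
Qed.

Lemma hS_zero l p q y j : valid l p q y -> (size l < j)%N -> hS l p q y j = 0%N.
Proof.
move=> v hj; have [_ _ _ e4] := valid_facts v; case: v => h1 h2 _ _.
rewrite /hS; do ! case: ifP; try lia; by rewrite part_out.
Qed.

Lemma mkS_spec l p q y : is_partition l -> valid l p q y ->
  is_partition (mkS l p q y) /\ forall j, (1 <= j)%N -> part (mkS l p q y) j = hS l p q y j.
Proof.
move=> pl v; apply: mkpart_spec; first by move=> j; exact: hS_dec.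
by move=> j; exact: hS_zero.
Qed.

End M3.
Import M3.

Module M4.
Local Open Scope fset_scope.

Definition ylist (s : seq nat) m n : seq cell :=
  flatten [seq [seq (x, y) | y <- iota 1 (part s x)] | x <- iota m n].

Lemma mem_ylist s m n x y : ((x, y) \in ylist s m n) =
  [&& (m <= x < m + n)%N, (0 < y)%N & (y <= part s x)%N].
Proof.
apply/flatten_mapP/idP.
- case=> x' hx' /mapP[y' hy' [-> ->]]; move: hx' hy'; rewrite !mem_iota; lia.
- case/and3P=> h1 h2 h3; exists x; first by rewrite mem_iota.
  apply/mapP; exists y => //; rewrite mem_iota; lia.
Qed.

Lemma uniq_ylist s m n : uniq (ylist s m n).
Proof.
elim: n m => [|n IH] m //=.
rewrite cat_uniq; apply/and3P; split.
- rewrite map_inj_uniq ?iota_uniq //; by move=> a b [].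
- apply/hasPn => -[x y] /=; rewrite -/(ylist s m.+1 n) mem_ylist => /andP[h _].
  apply/mapP => -[y' _ [ex _]]; lia.
- exact: IH.
Qed.

Lemma mem_young s x y : ((x, y) \in young s) = [&& (0 < x)%N, (0 < y)%N & (y <= part s x)%N].
Proof.
rewrite /young in_fset /= -/(ylist s 1 (size s)) mem_ylist.
apply/idP/idP.
- case/and3P => h1 h2 h3; apply/and3P; split => //; lia.
- case/and3P => h1 h2 h3; apply/and3P; split => //.
  case: (leqP x (size s)) => hx; first lia.
  by rewrite part_out in h3 => //; lia.
Qed.

Lemma card_young s : #|` young s| = psize s.
Proof.
rewrite /young card_fseq undup_id; last exact: (uniq_ylist s 1 (size s)).
rewrite size_flatten /shape -map_comp.
rewrite (eq_map (g := fun x => part s x)); last by move=> x /=; rewrite size_map size_iota.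
rewrite /psize -{3}(mkseq_nth 0%N s) /mkseq.
rewrite -(addn0 1%N) iotaDl -map_comp; congr sumn; apply: eq_map => x /=.
Qed.

Lemma mem_skew l s x y : ((x, y) \in young l `\` young s) =
  [&& (0 < x)%N, (part s x < y)%N & (y <= part l x)%N].
Proof.
rewrite in_fsetD !mem_young; apply/idP/idP.
- case/andP => h hh; case/and3P: hh => h1 h2 h3; rewrite h1 h3 andbT /=.
  rewrite ltnNge; apply/negP => h4; move/negP: h; apply; rewrite h1 h2 h4.
  done.
- case/and3P => h1 h2 h3; rewrite h1 h3 /=; apply/andP; split; last lia.
  apply/negP => hh; move: hh; rewrite -lez_nat; lia.
Qed.

Lemma young_sub s l : (forall x, (1 <= x)%N -> (part s x <= part l x)%N) ->
  young s `<=` young l.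
Proof.
move=> h; apply/fsubsetP => -[x y]; rewrite !mem_young => /and3P[h1 h2 h3].
rewrite h1 h2 /=; exact: leq_trans h3 (h x h1).
Qed.

Lemma young_sub_inv s l x : young s `<=` young l -> (1 <= x)%N -> (part s x <= part l x)%N.
Proof.
move=> /fsubsetP h hx; case: (posnP (part s x)) => [-> //|hp].
have := h (x, part s x); rewrite !mem_young hx hp leqnn => /(_ isT) /and3P[_ _ //].
Qed.

Definition conn (g : {fset cell}) c d :=
  exists p : seq cell, [/\ path adj c p, last c p = d & all (fun e => e \in g) p].

Lemma conn_refl g c : conn g c c.
Proof. by exists [::]. Qed.

Lemma conn_trans g c d e : conn g c d -> conn g d e -> conn g c e.
Proof.
case=> p1 [h1 h2 h3] [p2 [k1 k2 k3]]; exists (p1 ++ p2).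
by rewrite cat_path last_cat all_cat h1 h2 h3 k1 k2 k3.
Qed.

Lemma adj_sym c d : adj c d = adj d c.
Proof.
case: c d => [x y] [x' y']; rewrite /adj /=.
by rewrite [x' == x]eq_sym [y' == y]eq_sym [(y' == y.+1) || _]orbC [(x' == x.+1) || _]orbC.
Qed.

Lemma last_rev_belast (x : cell) s : last (last x s) (rev (belast x s)) = x.
Proof.
elim: s x => [|y s IH] x //=.
by rewrite rev_cons last_rcons.
Qed.

Lemma conn_sym g c d : c \in g -> conn g c d -> conn g d c.
Proof.
move=> cg [p [h1 h2 h3]]; exists (rev (belast c p)); split.
- rewrite -h2; move: h1; rewrite rev_path.
  by rewrite (@eq_path _ (fun y z => adj z y) adj) // => a b; rewrite adj_sym.
- by rewrite -h2 last_rev_belast.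
- rewrite all_rev; apply/allP => e /mem_belast; rewrite inE => /orP[/eqP -> //|].
  by move/(allP h3).
Qed.

Lemma conn_step g c d : adj c d -> d \in g -> conn g c d.
Proof. by move=> a dg; exists [:: d]; rewrite /= a dg. Qed.

End M4.
Import M4.

Module M5.


Section Geo.
Variables (l s : seq nat).
Local Notation g := (young l `\` young s)%fset.

Lemma horiz x k y : (0 < x)%N -> (part s x < y)%N -> (y + k <= part l x)%N ->
  conn g (x, y + k) (x, y).
Proof.
move=> h0 h1; elim: k => [|k IH] h2; first by rewrite addn0; exact: conn_refl.
apply: (@conn_trans _ _ (x, y + k)); last by apply: IH; lia.
apply: conn_step; first by rewrite /adj /=; lia.
rewrite mem_skew; apply/and3P; split => //; lia.
Qed.

Lemma to_left x y : (0 < x)%N -> (part s x < y)%N -> (y <= part l x)%N ->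
  conn g (x, y) (x, (part s x).+1).
Proof.
move=> h0 h1 h2; have -> : y = (part s x).+1 + (y - (part s x).+1) by lia.
apply: horiz => //; lia.
Qed.

Variables (p q : nat).
Hypothesis hp : (1 <= p)%N.
Hypothesis hin : forall x, (p <= x <= q)%N -> (part s x < part l x)%N.
Hypothesis hstep : forall x, (p <= x < q)%N -> part l x.+1 = (part s x).+1.

Lemma reach n x y : q - x = n -> (p <= x <= q)%N -> (part s x < y)%N -> (y <= part l x)%N ->
  conn g (x, y) (q, (part s q).+1).
Proof.
elim: n x y => [|n IH] x y hn hx h1 h2.
  have ex : x = q by lia. subst x.
  apply: to_left => //; lia.
apply: conn_trans (to_left _ h1 h2) _; first lia.
have e := hstep (x := x) ltac:(lia).
have hx1 := hin (x := x.+1) ltac:(lia).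
apply: (@conn_trans _ _ (x.+1, (part s x).+1)).
  apply: conn_step; first by rewrite /adj /=; lia.
  rewrite mem_skew; apply/and3P; split => //; lia.
apply: IH; lia.
Qed.

Hypothesis hout : forall x, (1 <= x)%N -> (x < p)%N || (q < x)%N -> part s x = part l x.
Hypothesis hsub : forall x, (1 <= x)%N -> (part s x <= part l x)%N.
Hypothesis hno : forall x, (1 <= x)%N -> (part l x.+1 <= (part s x).+1)%N.
Hypothesis hpq : (p <= q)%N.

Lemma build_geo : is_partition s -> border_strip_rem l g s.
Proof.
move=> ps; split => //.
- exact: young_sub.
split.
- apply/eqP => e; have := hin (x := p) ltac:(lia).
  move=> h; have : (p, (part s p).+1) \in g by rewrite mem_skew; apply/and3P; split => //; lia.
  by rewrite e inE.
- have key : forall c, c \in g -> conn g c (q, (part s q).+1).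
    move=> [x y]; rewrite mem_skew => /and3P[h0 h1 h2].
    have hx : (p <= x <= q)%N.
      case: (boolP ((x < p)%N || (q < x)%N)) => hh; last lia.
      have := hout h0 hh; lia.
    exact: (reach (n := q - x)).
  move=> c d hc hd.
  have := conn_trans (key c hc) (conn_sym hd (key d hd)).
  by case=> pp [h1 h2 h3]; exists pp.
- case=> x [y [c1 c2 c3 c4]].
  move: c1 c4; rewrite !mem_skew => /and3P[h0 h1 _] /and3P[_ _ h4].
  have := hno h0; lia.
Qed.
End Geo.

End M5.
Import M5.

Module M6.

Lemma path_stay l s w c pp : (part l w.+1 <= part s w)%N ->
  c \in (young l `\` young s)%fset -> (c.1 <= w)%N -> path adj c pp ->
  all (fun e => e \in (young l `\` young s)%fset) pp -> ((last c pp).1 <= w)%N.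
Proof.
move=> hw; elim: pp c => [|e pp IH] c; first by [].
move=> hc hcw /= hpa hal; case/andP: hpa => ace hp; case/andP: hal => he hall.
apply: (IH e he _ hp hall).
clear IH hp hall.
case: c e hc he ace hcw => [x1 y1] [x2 y2] /=; rewrite !mem_skew /adj /= => hc he ace hcw.
case: (leqP x2 w) => // hx2.
have ex2 : x2 = w.+1 by lia.
have ex1 : x1 = w by lia.
have ey : y2 = y1 by lia.
subst; lia.
Qed.

Lemma char_geo l s g : is_partition l -> border_strip_rem l g s ->
  exists p q, [/\ (1 <= p <= q)%N,
    (forall x, (p <= x <= q)%N -> (part s x < part l x)%N),
    (forall x, (p <= x < q)%N -> part l x.+1 = (part s x).+1),
    (forall x, (1 <= x)%N -> (x < p)%N || (q < x)%N -> part s x = part l x) &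
    (forall x, (1 <= x)%N -> (part s x <= part l x)%N)].
Proof.
move=> pl [ps hsub eg [hne hconn hno2]]; subst g.
have hle : forall x, (1 <= x)%N -> (part s x <= part l x)%N.
  by move=> x hx; exact: young_sub_inv hsub hx.
have hno : forall x, (1 <= x)%N -> (part l x.+1 <= (part s x).+1)%N.
  move=> x hx; rewrite leqNgt; apply/negP => hlt; apply: hno2.
  have m1 := part_mono pl (leqnSn x); have m2 := part_mono ps (leqnSn x).
  exists x, (part s x).+1; split; rewrite mem_skew; apply/and3P; split; lia.
have cut : forall x z w, (1 <= x)%N -> (part s x < part l x)%N -> (part s z < part l z)%N ->
    (x <= w < z)%N -> (part s w < part l w.+1)%N.
  move=> x z w hx h1 h2 hw; rewrite ltnNge; apply/negP => hc.
  have cx : (x, part l x) \in (young l `\` young s)%fset by rewrite mem_skew; apply/and3P; split; lia.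
  have cz : (z, part l z) \in (young l `\` young s)%fset by rewrite mem_skew; apply/and3P; split; lia.
  case: (hconn _ _ cx cz) => pp [h3 h4 h5].
  have := path_stay hc cx _ h3 h5; rewrite h4 /=; lia.
pose NE x := (1 <= x)%N && (part s x < part l x)%N.
have exNE : exists x, NE x.
  case/fset0Pn: hne => -[x y]; rewrite mem_skew => /and3P[h1 h2 h3].
  by exists x; rewrite /NE; lia.
have ubNE : forall x, NE x -> (x <= size l)%N.
  move=> x /andP[h1 h2]; case: (leqP x (size l)) => // hx.
  move: h2; rewrite (part_out hx); lia.
case: (ex_minnP exNE) => p Pp minp.
case: (ex_maxnP exNE ubNE) => q Pq maxq.
have hpq : (p <= q)%N by apply: maxq.
move: (Pp) (Pq) => /andP[p1 p2] /andP[q1 q2].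
have hstep : forall x, (p <= x < q)%N -> part l x.+1 = (part s x).+1.
  move=> x hx; have := cut p q x p1 p2 q2 hx; have := hno x ltac:(lia); lia.
exists p, q; split => //.
- lia.
- move=> x hx; case: (ltngtP p x) => hpx; last by subst.
  + have := cut p q x.-1 p1 p2 q2 ltac:(lia); have := part_mono ps (leq_pred x).
    rewrite prednK; lia.
  + lia.
- move=> x hx hx2; have := hle x hx; rewrite leq_eqVlt => /orP[/eqP //|hlt].
  have nx : NE x by rewrite /NE hx hlt.
  have := minp x nx; have := maxq x nx; lia.
Qed.

End M6.
Import M6.

Module M7.
Local Open Scope ring_scope.

Lemma mkS_part l p q y x : is_partition l -> valid l p q y -> (1 <= x)%N ->
  part (mkS l p q y) x = hS l p q y x.
Proof. by move=> pl v hx; case: (mkS_spec pl v) => _ h; exact: h. Qed.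

Lemma mkS_partition l p q y : is_partition l -> valid l p q y -> is_partition (mkS l p q y).
Proof. by move=> pl v; case: (mkS_spec pl v). Qed.

Lemma strip_build l p q y : is_partition l -> valid l p q y ->
  border_strip_rem l (young l `\` young (mkS l p q y))%fset (mkS l p q y).
Proof.
move=> pl v; have [e1 e2 e3 e4] := valid_facts v; have v' := v; case: v' => h1 h2 _ _.
move: e1 e2 e3 e4; set t := `|(y + q%:Z)%R|%N => e1 e2 e3 e4.
have ps := mkS_partition pl v.
have pS := mkS_part pl v.
have lq1 : forall x, (x <= q)%N -> (0 < part l x)%N.
  move=> x hx; have := part_mono pl hx; lia.
apply: (build_geo (p := p) (q := q)) => //.
- move=> x /andP[hx1 hx2]; rewrite pS; last lia.
  case: (ltngtP x q) => hxq.
  + rewrite hS_mid; last lia.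
    have := lq1 x.+1 hxq; have := part_mono pl (leqnSn x); lia.
  + lia.
  + subst x; rewrite hS_q //.
- move=> x hx; rewrite pS; last lia.
  rewrite hS_mid //; have := lq1 x.+1 ltac:(lia); lia.
- move=> x hx /orP[hx2|hx2]; rewrite pS //; first by rewrite hS_lt.
  rewrite hS_gt //; lia.
- move=> x hx; rewrite pS //.
  case: (ltnP x p) => hxp; first by rewrite hS_lt.
  case: (ltngtP x q) => hxq.
  + rewrite hS_mid; last lia; have := part_mono pl (leqnSn x); lia.
  + rewrite hS_gt //; lia.
  + subst x; rewrite hS_q //; lia.
- move=> x hx; rewrite pS //.
  have m1 := part_mono pl (leqnSn x).
  case: (ltnP x p) => hxp; first by rewrite hS_lt //; lia.
  case: (ltngtP x q) => hxq.
  + rewrite hS_mid; last lia; lia.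
  + rewrite hS_gt //; lia.
  + subst x; rewrite hS_q //; lia.
Qed.

Lemma strip_char l g s : is_partition l -> border_strip_rem l g s ->
  exists p q y, [/\ valid l p q y, s = mkS l p q y & g = (young l `\` young s)%fset].
Proof.
move=> pl bs; have [p [q [hpq hin hstep hout hsub]]] := char_geo pl bs.
case: bs => ps _ eg _.
exists p, q, (F s q); have v : valid l p q (F s q).
  split; try lia.
  - rewrite /F; have := part_mono ps (leqnSn q); have := hout q.+1 isT ltac:(lia); lia.
  - rewrite /F; have := hin q ltac:(lia); lia.
split => //.
apply: part_inj => //; first exact: mkS_partition.
move=> j hj; rewrite mkS_part //.
case: (ltnP j p) => hjp; first by rewrite hS_lt // hout // hjp.
case: (ltngtP j q) => hjq.
- rewrite hS_mid; last lia; have := hstep j ltac:(lia); lia.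
- rewrite hS_gt; last lia; rewrite hout //; lia.
- subst j; rewrite hS_q //; rewrite /F; lia.
Qed.

End M7.
Import M7.

Module M8.
Local Open Scope ring_scope.

Section MK.
Variables (l : seq nat) (p q : nat) (y : int).
Hypothesis pl : is_partition l.
Hypothesis v : valid l p q y.
Local Notation s := (mkS l p q y).

Lemma F_mk_lt j : (1 <= j)%N -> (j < p)%N -> F s j = F l j.
Proof. by move=> h1 h2; rewrite /F mkS_part // hS_lt. Qed.

Lemma F_mk_gt j : (q < j)%N -> F s j = F l j.
Proof. case: v => h1 h2 _ _ h; rewrite /F mkS_part ?hS_gt //; lia. Qed.

Lemma F_mk_mid j : (p <= j < q)%N -> F s j = F l j.+1.
Proof.
have [e1 e2 e3 e4] := valid_facts v; case: v => h1 h2 _ _ h.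
rewrite /F mkS_part ?hS_mid //; last lia.
have := part_mono pl (_ : (j.+1 <= q)%N); lia.
Qed.

Lemma F_mk_q : F s q = y.
Proof.
have [e1 e2 e3 e4] := valid_facts v; case: v => h1 h2 _ _.
rewrite /F mkS_part ?hS_q //; lia.
Qed.

Lemma valid_lt j : (1 <= j)%N -> (y < F l j) = (j <= q)%N.
Proof.
case: v => h1 h2 h3 h4 hj; case: (leqP j q) => hjq.
  by have := F_le pl hjq; lia.
by have := F_le pl hjq; lia.
Qed.

Lemma valid_notin : ~ inR l y.
Proof.
case=> j hj e; have := valid_lt hj; case: (leqP j q) => hjq; rewrite e ltxx //.
case: v => h1 h2 h3 h4; have := F_le pl hjq; lia.
Qed.

Lemma range_mk z : inR s z <-> (inR l z /\ z <> F l p) \/ z = y.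
Proof.
case: (v) => h1 h2 h3 h4; split.
- case=> j hj <-.
  case: (ltnP j p) => hjp.
    left; rewrite F_mk_lt //; split; first by exists j.
    by move/(F_inj pl) => e; lia.
  case: (ltngtP j q) => hjq.
  + left; rewrite F_mk_mid; last lia; split; first by exists j.+1.
    by move/(F_inj pl) => e; lia.
  + left; rewrite F_mk_gt //; split; first by exists j.
    by move/(F_inj pl) => e; lia.
  + by right; subst j; rewrite F_mk_q.
- case=> [[[j hj <-] hne]|->]; last by exists q; [lia| exact: F_mk_q].
  have hjp : j != p by apply/eqP => e; apply: hne; rewrite e.
  case: (ltnP j p) => hjp'.
    by exists j => //; rewrite F_mk_lt.
  case: (leqP j q) => hjq.
    exists j.-1; first lia.
    rewrite F_mk_mid; last lia.
    by rewrite prednK //; lia.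
  by exists j => //; rewrite F_mk_gt.
Qed.

Lemma height_mk : ht (young l `\` young s)%fset = (q - p)%N.
Proof.
case: (v) => h1 h2 h3 h4.
rewrite /ht.
have hin : forall x, (p <= x <= q)%N -> (part s x < part l x)%N.
  move=> x hx; have := F_mk_q; have := F_mk_mid (j := x).
  case: (ltngtP x q) => hxq.
  + move=> /(_ ltac:(lia)); rewrite /F; have := F_lt pl (ltnSn x); rewrite /F; lia.
  + lia.
  + subst x; move: h4; rewrite /F; lia.
have hout : forall x, (1 <= x)%N -> (x < p)%N || (q < x)%N -> part s x = part l x.
  move=> x hx /orP[hh|hh].
    by have := F_mk_lt hx hh; rewrite /F; lia.
  by have := F_mk_gt hh; rewrite /F; lia.
have e : undup [seq c.1 | c <- (young l `\` young s)%fset] =i iota p (q - p).+1.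
  move=> x; rewrite mem_undup mem_iota; apply/mapP/idP.
  - case=> -[x' y'] /= hm ->.
    have : (x', y') \in (young l `\` young s)%fset by [].
    rewrite mem_skew => /and3P[k1 k2 k3].
    case: (boolP ((x' < p)%N || (q < x')%N)) => hh; last lia.
    have := hout x' k1 hh; lia.
  - move=> hx; exists (x, (part s x).+1) => //.
    suff : (x, (part s x).+1) \in (young l `\` young s)%fset by [].
    rewrite mem_skew; have := hin x ltac:(lia); lia.
rewrite (perm_size (uniq_perm (undup_uniq _) (iota_uniq _ _) e)) size_iota.
by [].
Qed.
End MK.

End M8.
Import M8.

Module M9.
Local Open Scope ring_scope.

Lemma F_mk_ge l p q y x : is_partition l -> valid l p q y -> (1 <= x)%N ->
  F l x.+1 <= F (mkS l p q y) x.
Proof.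
move=> pl v hx; have v' := v; case: v' => h1 h2 h3 h4.
case: (ltnP x p) => hxp.
  rewrite F_mk_lt //; apply: F_le pl _; exact: leqnSn.
case: (ltngtP x q) => hxq.
- rewrite F_mk_mid //; lia.
- rewrite F_mk_gt //; apply: F_le pl _; exact: leqnSn.
- by subst x; rewrite F_mk_q //; apply: ltW.
Qed.

Lemma incl_mk l p1 q1 y1 p2 q2 y2 : is_partition l -> valid l p1 q1 y1 -> valid l p2 q2 y2 ->
  (p2 <= p1)%N -> y2 <= y1 ->
  (young l `\` young (mkS l p1 q1 y1) `<=` young l `\` young (mkS l p2 q2 y2))%fset.
Proof.
move=> pl v1 v2 hp hy; apply: fsetDS; apply: young_sub => x hx.
suff : F (mkS l p2 q2 y2) x <= F (mkS l p1 q1 y1) x by rewrite /F; lia.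
have hq : (q1 <= q2)%N.
  case: (leqP q1 q2) => // hq.
  have := valid_lt pl v1 (j := q2.+1) isT; have := valid_lt pl v2 (j := q2.+1) isT.
  rewrite ltnn hq; lia.
case: (v2) => a1 a2 a3 a4.
case: (ltnP x p2) => hxp.
  rewrite !F_mk_lt //; lia.
case: (ltngtP x q2) => hxq.
- rewrite F_mk_mid //; last lia; exact: F_mk_ge.
- by rewrite !F_mk_gt //; lia.
- subst x; rewrite F_mk_q //.
  case: (ltngtP q1 q2) => hq12.
  + rewrite F_mk_gt //; lia.
  + lia.
  + by subst; rewrite F_mk_q.
Qed.

Lemma bracket l p y : is_partition l -> (1 <= p)%N -> ~ inR l y -> y < F l p ->
  exists q, valid l p q y.
Proof.
move=> pl hp ny hy.
suff H : forall k p, (1 <= p)%N -> y < F l p -> F l (p + k) <= y -> exists q, valid l p q y.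
  apply: (H (size l + `|y|%N).+1 p hp hy).
  rewrite F_out; lia.
elim=> [|k IH] p' hp' hy' hk; first by rewrite addn0 in hk; lia.
case: (ltP y (F l p'.+1)) => h.
  case: (IH p'.+1 isT h _); first by rewrite addSnnS.
  move=> q [v1 v2 v3 v4]; exists q; split => //; lia.
exists p'; split => //.
rewrite lt_neqAle h andbT; apply/eqP => e; apply: ny; by exists p'.+1.
Qed.

Lemma sum_part l N : (size l <= N)%N -> sumn (map (part l) (iota 1 N)) = sumn l.
Proof.
elim: l N => [|x l IH] N /=.
  move=> _; elim: (iota 1 N) => //= j r ->; by rewrite /part nth_nil.
case: N => [|N] //= hN.
rewrite -(IH N) //; congr (_ + _)%N.
rewrite -(addn1 1) iotaDl -map_comp; congr sumn; apply/eq_in_map => j.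
by rewrite mem_iota /part /= add1n; case: j.
Qed.

Definition Lseq l N := map (F l) (iota 1 N).

Lemma mem_Lseq l N z : is_partition l -> (size l <= N)%N ->
  (z \in Lseq l N) <-> (inR l z /\ - (N%:Z) <= z).
Proof.
move=> pl hN; split.
- case/mapP => j; rewrite mem_iota => hj ->; split; first by exists j; lia.
  rewrite /F; lia.
- case=> -[j hj <-] hz; apply/mapP; exists j => //; rewrite mem_iota.
  case: (leqP j N) => hjN; first lia.
  by rewrite F_out in hz; lia.
Qed.

Lemma uniq_Lseq l N : is_partition l -> uniq (Lseq l N).
Proof.
move=> pl; rewrite map_inj_uniq ?iota_uniq //; move=> i j; exact: F_inj.
Qed.

Lemma perm_gen l m N X Y : is_partition l -> is_partition m ->
  (size l <= N)%N -> (size m <= N)%N -> uniq X -> uniq Y ->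
  (forall z, (inR l z /\ ~ inR m z) <-> z \in X) ->
  (forall z, (inR m z /\ ~ inR l z) <-> z \in Y) ->
  perm_eq (Lseq l N ++ Y) (Lseq m N ++ X).
Proof.
move=> pl pm hl hm uX uY hX hY.
have lowX : forall z, inR l z -> ~ inR m z -> - (N%:Z) <= z.
  move=> z [j hj <-] nm; case: (leqP j N) => hjN; first by rewrite /F; lia.
  exfalso; apply: nm; exists j => //; rewrite !F_out //; lia.
have lowY : forall z, inR m z -> ~ inR l z -> - (N%:Z) <= z.
  move=> z [j hj <-] nm; case: (leqP j N) => hjN; first by rewrite /F; lia.
  exfalso; apply: nm; exists j => //; rewrite !F_out //; lia.
have memeq : forall z, (z \in Lseq l N ++ Y) <-> ((inR l z \/ inR m z) /\ - (N%:Z) <= z).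
  move=> z; rewrite mem_cat; split.
  - case/orP => [/(mem_Lseq z pl hl) [h1 h2]|/hY [h1 h2]]; split; auto.
  - case=> [[h|h] hz]; apply/orP.
      by left; apply/(mem_Lseq z pl hl).
    case: (classic (inR l z)) => h'.
      by left; apply/(mem_Lseq z pl hl).
    by right; apply/hY.
have memeq' : forall z, (z \in Lseq m N ++ X) <-> ((inR l z \/ inR m z) /\ - (N%:Z) <= z).
  move=> z; rewrite mem_cat; split.
  - case/orP => [/(mem_Lseq z pm hm) [h1 h2]|/hX [h1 h2]]; split; auto.
  - case=> [[h|h] hz]; apply/orP; last by left; apply/(mem_Lseq z pm hm).
    case: (classic (inR m z)) => h'.
      by left; apply/(mem_Lseq z pm hm).
    by right; apply/hX.
apply: uniq_perm.
- rewrite cat_uniq uniq_Lseq // uY andbT /=; apply/hasPn => z /hY [_ nl].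
  by apply/negP => /(mem_Lseq z pl hl) [].
- rewrite cat_uniq uniq_Lseq // uX andbT /=; apply/hasPn => z /hX [_ nl].
  by apply/negP => /(mem_Lseq z pm hm) [].
- move=> z; apply/idP/idP => h.
  + by apply/memeq'; apply/memeq.
  + by apply/memeq; apply/memeq'.
Qed.

Lemma sum_Lseq l N : (size l <= N)%N ->
  \sum_(z <- Lseq l N) z = (psize l)%:Z - \sum_(j <- iota 1 N) j%:Z.
Proof.
move=> hN; rewrite /Lseq big_map /F sumrB; congr (_ - _).
rewrite /psize -(sum_part hN) sumnE big_map.
rewrite -natz natr_sum; apply: eq_bigr => j _; by rewrite natz.
Qed.

Lemma count_Lseq l N (v : int) k : (k <= N)%N ->
  (forall j, (1 <= j)%N -> (v < F l j) = (j <= k)%N) ->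
  count (fun z => v < z) (Lseq l N) = k.
Proof.
move=> hk h; rewrite /Lseq count_map.
rewrite (@eq_in_count _ _ (fun j => (j <= k)%N)); last first.
  by move=> j; rewrite mem_iota => /andP[h1 _]; rewrite /= h.
rewrite -(subnKC hk) iotaD count_cat.
rewrite (@eq_in_count _ _ predT); last by move=> j; rewrite mem_iota /=; lia.
rewrite (@eq_in_count _ (fun j => (j <= k)%N) pred0); last by move=> j; rewrite mem_iota /=; lia.
by rewrite count_predT count_pred0 size_iota addn0.
Qed.

End M9.
Import M9.

Module M10.
Local Open Scope ring_scope.

Lemma range_eq s1 s2 : is_partition s1 -> is_partition s2 ->
  (forall z, inR s1 z <-> inR s2 z) -> s1 = s2.
Proof.
move=> p1 p2 h.
suff H : forall n j, (1 <= j <= n)%N -> F s1 j = F s2 j.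
  apply: part_inj => // j hj; have := H j j ltac:(lia); rewrite /F; lia.
elim=> [|n IH] j hj; first lia.
case: (ltnP j n.+1) => hjn; first by apply: IH; lia.
have ejn : j = n.+1 by lia.
have [k hk ek] : inR s2 (F s1 j) by apply/h; exists j => //; lia.
have [m hm em] : inR s1 (F s2 j) by apply/h; exists j => //; lia.
have hkj : (j <= k)%N.
  case: (leqP j k) => // hkj; have := IH k ltac:(lia); rewrite ek => e.
  by have := F_inj p1 e; lia.
have hmj : (j <= m)%N.
  case: (leqP j m) => // hmj; have := IH m ltac:(lia); rewrite em => e.
  by have := F_inj p2 e; lia.
have := F_le p2 hkj; have := F_le p1 hmj; lia.
Qed.

Lemma psize_mk l p q y : is_partition l -> valid l p q y ->
  (psize l)%:Z + y = (psize (mkS l p q y))%:Z + F l p.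
Proof.
move=> pl v; have ps := mkS_partition pl v; set s := mkS l p q y.
have ny := valid_notin pl v.
have yx : y < F l p by case: v => h1 h2 h3 h4; have := F_le pl h2; lia.
have hr := range_mk pl v.
have P := @perm_gen l s (size l + size s) [:: F l p] [:: y] pl ps ltac:(lia) ltac:(lia) isT isT.
have {}P : perm_eq (Lseq l (size l + size s) ++ [:: y]) (Lseq s (size l + size s) ++ [:: F l p]).
  apply: P => z; rewrite inE; split.
  - case=> h1 h2; apply/eqP; apply: NNPP => ne; apply: h2; apply/hr; by left.
  - move/eqP => ->; split; first by exists p => //; case: v.
    case/hr => [[_ //]|e]; lia.
  - case=> /hr [[h1 _] h2|->]; [by exfalso; apply: h2|by []].
  - move/eqP => ->; split => //; apply/hr; by right.
have : \sum_(z <- Lseq l (size l + size s) ++ [:: y]) z = \sum_(z <- Lseq s (size l + size s) ++ [:: F l p]) z.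
  exact: perm_big P.
rewrite !big_cat !sum_Lseq ?big_seq1; [|lia|lia].
set S := \sum_(j <- _) _.
move=> e.
have e2 : ((psize l)%:Z - S) + y = ((psize s)%:Z - S) + F l p := e.
clear e; lia.
Qed.

Lemma card_mk l p q y : is_partition l -> valid l p q y ->
  (#|` (young l `\` young (mkS l p q y))%fset |)%:Z = F l p - y.
Proof.
move=> pl v; have [_ hsub _ _] := strip_build pl v.
rewrite cardfsDS // !card_young.
have e := psize_mk pl v.
have yx : y < F l p by case: v => h1 h2 h3 h4; have := F_le pl h2; lia.
move: e yx; move: (psize l) (psize (mkS l p q y)) (F l p) => a b c.
clear; lia.
Qed.

Lemma set_swap (Rl Rm : int -> Prop) x y x' y' :
  (forall z, (Rl z /\ ~ Rm z) <-> z = x \/ z = y') ->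
  (forall z, (Rm z /\ ~ Rl z) <-> z = x' \/ z = y) -> x <> y' -> x' <> y ->
  forall z, ((Rl z /\ z <> x) \/ z = y) <-> ((Rm z /\ z <> x') \/ z = y').
Proof.
move=> HA HB h1 h2 z; split.
- case=> [[hl hx]|->].
    case: (classic (Rm z)) => hm.
      left; split => // e; subst z; have [_ //] := proj2 (HB x') (or_introl erefl).
    right; have := proj1 (HA z) (conj hl hm); tauto.
  left; have [hm _] := proj2 (HB y) (or_intror erefl); split => //; auto.
- case=> [[hm hx]|->].
    case: (classic (Rl z)) => hl.
      left; split => // e; subst z; have [_ //] := proj2 (HA x) (or_introl erefl).
    right; have := proj1 (HB z) (conj hm hl); tauto.
  left; have [hl _] := proj2 (HA y') (or_intror erefl); split => //; auto.
Qed.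

Lemma config (Rl Rm : int -> Prop) A1 A2 B1 B2 x y x' y' :
  A1 <> A2 -> B1 <> B2 ->
  (forall z, (Rl z /\ ~ Rm z) <-> z = A1 \/ z = A2) ->
  (forall z, (Rm z /\ ~ Rl z) <-> z = B1 \/ z = B2) ->
  (forall z, ((Rl z /\ z <> x) \/ z = y) <-> ((Rm z /\ z <> x') \/ z = y')) ->
  (x = A1 \/ x = A2) /\ (y = B1 \/ y = B2).
Proof.
move=> nA nB HA HB H.
have kA : forall A, Rl A -> ~ Rm A -> A <> x -> A = y'.
  move=> A hl hm hx; case: (proj1 (H A) (or_introl (conj hl hx))) => // -[hm' _]; by [].
have kB : forall B, Rm B -> ~ Rl B -> B <> x' -> B = y.
  move=> B hm hl hx; case: (proj2 (H B) (or_introl (conj hm hx))) => // -[hl' _]; by [].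
have [a1 a1'] := proj2 (HA A1) (or_introl erefl).
have [a2 a2'] := proj2 (HA A2) (or_intror erefl).
have [b1 b1'] := proj2 (HB B1) (or_introl erefl).
have [b2 b2'] := proj2 (HB B2) (or_intror erefl).
split.
- case: (classic (x = A1)) => e1; first by left.
  case: (classic (x = A2)) => e2; first by right.
  exfalso; apply: nA.
  have f1 := kA A1 a1 a1' (fun e => e1 (esym e)).
  have f2 := kA A2 a2 a2' (fun e => e2 (esym e)).
  by rewrite f1 f2.
- case: (classic (x' = B1)) => e1.
    right; symmetry; apply: kB => // e; apply: nB; congruence.
  left; symmetry; apply: kB => // e; apply: e1; by rewrite e.
Qed.

Lemma F_rat s j : ((F s j)%:~R : rat) = (part s j)%:R - j%:R.
Proof. by rewrite /F rmorphB. Qed.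

Lemma inS_inR s (z : int) : inS s (z%:~R + 1 / 2) <-> inR s z.
Proof.
split.
- case=> j hj e; exists j => //; apply/eqP; rewrite -(eqr_int rat) F_rat.
  by apply/eqP; move/addIr: e.
- case=> j hj <-; exists j => //; by rewrite F_rat.
Qed.

End M10.
Import M10.

Module M11.
Local Open Scope ring_scope.

Lemma assemble lam mu p1 q1 y1 p1' q1' y1' p2 q2 y2 p2' q2' y2' :
  is_partition lam -> is_partition mu ->
  valid lam p1 q1 y1 -> valid mu p1' q1' y1' -> valid lam p2 q2 y2 -> valid mu p2' q2' y2' ->
  mkS lam p1 q1 y1 = mkS mu p1' q1' y1' -> mkS lam p2 q2 y2 = mkS mu p2' q2' y2' ->
  F lam p1 - y1 <> F lam p2 - y2 ->
  (p2 <= p1)%N -> y2 <= y1 -> (p2' <= p1')%N -> y2' <= y1' ->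
  (forall p q y p' q' y', valid lam p q y -> valid mu p' q' y' ->
     mkS lam p q y = mkS mu p' q' y' ->
     mkS lam p q y = mkS lam p1 q1 y1 \/ mkS lam p q y = mkS lam p2 q2 y2) ->
  exists g1 g1' g2 g2' : {fset cell},
    [/\ (g1, g1') <> (g2, g2'),
        (forall g g' : {fset cell},
           (exists s, border_strip_rem lam g s /\ border_strip_rem mu g' s) <->
           ((g, g') = (g1, g1') \/ (g, g') = (g2, g2'))),
        (g1 `<=` g2)%fset /\ (g1' `<=` g2')%fset,
        [/\ (#|` g1|)%:Z = F lam p1 - y1, (#|` g1'|)%:Z = F mu p1' - y1',
            (#|` g2|)%:Z = F lam p2 - y2 & (#|` g2'|)%:Z = F mu p2' - y2'] &
        [/\ ht g1 = (q1 - p1)%N, ht g1' = (q1' - p1')%N, ht g2 = (q2 - p2)%N & ht g2' = (q2' - p2')%N]].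
Proof.
move=> pl pm v1 v1' v2 v2' E1 E2 hne hp hy hp' hy' U.
exists (young lam `\` young (mkS lam p1 q1 y1))%fset, (young mu `\` young (mkS mu p1' q1' y1'))%fset,
       (young lam `\` young (mkS lam p2 q2 y2))%fset, (young mu `\` young (mkS mu p2' q2' y2'))%fset.
split.
- case=> e _; apply: hne; rewrite -(card_mk pl v1) -(card_mk pl v2); by rewrite e.
- move=> g g'; split.
  + case=> s [b1 b2].
    have [p [q [y [v e1 eg]]]] := strip_char pl b1.
    have [p' [q' [y' [v' e2 eg']]]] := strip_char pm b2.
    subst g g'.
    have := U p q y p' q' y' v v' (etrans (esym e1) e2).
    rewrite -e1 => -[es|es].
    * by left; rewrite es E1.
    * by right; rewrite es E2.
  + case=> -[-> ->].
    * exists (mkS lam p1 q1 y1); split; first exact: strip_build.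
      by rewrite E1; exact: strip_build.
    * exists (mkS lam p2 q2 y2); split; first exact: strip_build.
      by rewrite E2; exact: strip_build.
- split; first exact: incl_mk.
  exact: incl_mk.
- split.
  + exact: card_mk.
  + exact: card_mk.
  + exact: card_mk.
  + exact: card_mk.
- split; exact: height_mk.
Qed.

End M11.
Import M11.

Module M12.
Local Open Scope ring_scope.

Lemma hyp_conv s1 s2 (a b : nat) :
  (forall x : rat, (inS s1 x /\ ~ inS s2 x) <->
     (x = (part s1 a)%:R - a%:R + 1 / 2 \/ x = (part s1 b)%:R - b%:R + 1 / 2)) ->
  forall z, (inR s1 z /\ ~ inR s2 z) <-> (z = F s1 a \/ z = F s1 b).
Proof.
move=> H z; have := H (z%:~R + 1 / 2); rewrite -!F_rat => -[h1 h2].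
have eqh : forall w : int, (z%:~R + 1 / 2 = w%:~R + 1 / 2 :> rat) <-> z = w.
  move=> w; split; last by move=> ->.
  by move/addIr/eqP; rewrite eqr_int => /eqP.
split.
- case=> hs hn.
  have hs' : inS s1 (z%:~R + 1 / 2) by apply/inS_inR.
  have hn' : ~ inS s2 (z%:~R + 1 / 2) by move/inS_inR.
  by case: (h1 (conj hs' hn')) => /eqh; auto.
- move=> hz.
  have hh : (z%:~R + 1 / 2 = (F s1 a)%:~R + 1 / 2 :> rat) \/ (z%:~R + 1 / 2 = (F s1 b)%:~R + 1 / 2 :> rat).
    by case: hz => ->; auto.
  have [hs hn] := h2 hh; split; first by apply/inS_inR.
  by move=> hr; apply: hn; apply/inS_inR.
Qed.

Lemma idx_bound l m N j : (size l <= N)%N -> (size m <= N)%N -> ~ inR l (F m j) -> (j <= N)%N.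
Proof.
move=> hl hm h; case: (leqP j N) => // hj; exfalso; apply: h.
by exists j; [lia | rewrite !F_out //; lia].
Qed.

Lemma cnt_self l N j : is_partition l -> (1 <= j)%N -> (j <= N.+1)%N ->
  count (fun z => F l j < z) (Lseq l N) = (j - 1)%N.
Proof.
move=> pl h1 h2; apply: count_Lseq; first lia.
move=> i hi; have -> : (i <= j - 1)%N = (i < j)%N by apply/idP/idP; lia.
case: (ltnP i j) => hij; first by rewrite (F_lt pl hij).
apply/negbTE; rewrite -leNgt; exact: F_le.
Qed.

Lemma cnt_valid l N p q y : is_partition l -> valid l p q y -> (size l <= N)%N ->
  count (fun z => y < z) (Lseq l N) = q.
Proof.
move=> pl v hN; have [_ _ _ e4] := valid_facts v.
apply: (count_Lseq (k := q)).
  by apply: leq_trans hN.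
move=> j hj; exact: (valid_lt pl v hj).
Qed.

Lemma count2 (v u w : int) : count (fun z => v < z) [:: u; w] = (nat_of_bool (v < u)%R + nat_of_bool (v < w)%R)%N.
Proof. by rewrite /= addn0. Qed.

Lemma same_xy l p q y p1 q1 y1 : is_partition l -> valid l p q y -> valid l p1 q1 y1 ->
  F l p = F l p1 -> y = y1 -> mkS l p q y = mkS l p1 q1 y1.
Proof.
move=> pl v v1 e1 e2; apply: range_eq; try exact: mkS_partition.
move=> z; rewrite (range_mk pl v) (range_mk pl v1) e1 e2; by [].
Qed.

Lemma valid_lt_p l p q y : is_partition l -> valid l p q y -> y < F l p.
Proof. by move=> pl [h1 h2 h3 h4]; have := F_le pl h2; lia. Qed.

Lemma swap_eq lam mu p q y p' q' y' :
  is_partition lam -> is_partition mu -> valid lam p q y -> valid mu p' q' y' ->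
  (forall z, ((inR lam z /\ z <> F lam p) \/ z = y) <-> ((inR mu z /\ z <> F mu p') \/ z = y')) ->
  mkS lam p q y = mkS mu p' q' y'.
Proof.
move=> pl pm v v' H; apply: range_eq; try exact: mkS_partition.
move=> z; rewrite (range_mk pl v) (range_mk pm v'); exact: H.
Qed.

Lemma eq_ranges lam mu p q y p' q' y' :
  is_partition lam -> is_partition mu -> valid lam p q y -> valid mu p' q' y' ->
  mkS lam p q y = mkS mu p' q' y' ->
  (forall z, ((inR lam z /\ z <> F lam p) \/ z = y) <-> ((inR mu z /\ z <> F mu p') \/ z = y')).
Proof.
move=> pl pm v v' E z; rewrite -(range_mk pl v) -(range_mk pm v') E; by [].
Qed.

End M12.
Import M12.

Unset Implicit Arguments.
Local Open Scope fset_scope.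
Local Open Scope ring_scope.

Ltac bools := repeat match goal with |- context[nat_of_bool (?x < ?y)%R] =>
  case: (boolP (x < y)%R) => ? end.

Theorem lemma7 (lam mu : seq nat) (a b a' b' : nat) :
  is_partition lam -> is_partition mu ->
  psize mu = psize lam ->
  hamming lam mu = 2%N ->
  (1 <= a)%N -> (a < b)%N -> (1 <= a')%N -> (a' < b')%N ->
  (forall x : rat, (inS lam x /\ ~ inS mu x) <->
     (x = (part lam a)%:R - a%:R + 1 / 2 \/ x = (part lam b)%:R - b%:R + 1 / 2)) ->
  (forall x : rat, (inS mu x /\ ~ inS lam x) <->
     (x = (part mu a')%:R - a'%:R + 1 / 2 \/ x = (part mu b')%:R - b'%:R + 1 / 2)) ->
  exists g1 g1' g2 g2' : {fset cell},
    [/\ (g1, g1') <> (g2, g2'),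
        (forall g g' : {fset cell},
           (exists s, border_strip_rem lam g s /\ border_strip_rem mu g' s) <->
           ((g, g') = (g1, g1') \/ (g, g') = (g2, g2'))),
        (* (i) *)
        (g1 `<=` g2)%fset /\ (g1' `<=` g2')%fset,
        (* (ii) *)
        [/\ (#|` g1|)%:Z = `|(part lam a)%:Z - a%:Z - (part mu a')%:Z + a'%:Z|,
            (#|` g1'|)%:Z = `|(part lam a)%:Z - a%:Z - (part mu a')%:Z + a'%:Z|,
            (#|` g2|)%:Z = `|(part lam a)%:Z - a%:Z - (part mu b')%:Z + b'%:Z|
          & (#|` g2'|)%:Z = `|(part lam a)%:Z - a%:Z - (part mu b')%:Z + b'%:Z|]
      & (* (iii) *)
        ((part lam a)%:Z - a%:Z > (part mu a')%:Z - a'%:Z ->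
           [/\ (ht g1)%:Z = a'%:Z - a%:Z, (ht g1')%:Z = b%:Z - b'%:Z,
               (ht g2)%:Z = b'%:Z - a%:Z - 1 & (ht g2')%:Z = b%:Z - a'%:Z]) /\
        ((part lam a)%:Z - a%:Z < (part mu a')%:Z - a'%:Z ->
           [/\ (ht g1)%:Z = b'%:Z - b%:Z, (ht g1')%:Z = a%:Z - a'%:Z,
               (ht g2)%:Z = b'%:Z - a%:Z & (ht g2')%:Z = b%:Z - a'%:Z - 1])].
Proof.
move=> pl pm hsz _ ha hab ha' hab' HAr HBr.
have HA := hyp_conv HAr; have HB := hyp_conv HBr.
have A21 : F lam b < F lam a := F_lt pl hab.
have B21 : F mu b' < F mu a' := F_lt pm hab'.
have [inA1 nA1] := proj2 (HA (F lam a)) (or_introl erefl).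
have [inA2 nA2] := proj2 (HA (F lam b)) (or_intror erefl).
have [inB1 nB1] := proj2 (HB (F mu a')) (or_introl erefl).
have [inB2 nB2] := proj2 (HB (F mu b')) (or_intror erefl).
have nA12 : F lam a <> F lam b by move=> e; rewrite e ltxx in A21.
have nB12 : F mu a' <> F mu b' by move=> e; rewrite e ltxx in B21.
pose N := (size lam + size mu)%N.
have hl : (size lam <= N)%N by rewrite /N leq_addr.
have hm : (size mu <= N)%N by rewrite /N leq_addl.
have P : perm_eq (Lseq lam N ++ [:: F mu a'; F mu b']) (Lseq mu N ++ [:: F lam a; F lam b]).
  apply: perm_gen => //.
  - by rewrite /= inE andbT; apply/eqP.
  - by rewrite /= inE andbT; apply/eqP.
  - move=> z; rewrite !inE; split.
      by case/HA => ->; rewrite eqxx ?orbT.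
    by case/orP => /eqP ->; apply/HA; auto.
  - move=> z; rewrite !inE; split.
      by case/HB => ->; rewrite eqxx ?orbT.
    by case/orP => /eqP ->; apply/HB; auto.
have sumrel : F lam a + F lam b = F mu a' + F mu b'.
  have e : \sum_(z <- Lseq lam N ++ [:: F mu a'; F mu b']) z =
           \sum_(z <- Lseq mu N ++ [:: F lam a; F lam b]) z := perm_big _ P.
  rewrite !big_cat !sum_Lseq // !big_cons big_nil hsz in e.
  set S := \sum_(j <- _) _ in e.
  have e2 : ((psize lam)%:Z - S) + (F mu a' + (F mu b' + 0)) =
            ((psize lam)%:Z - S) + (F lam a + (F lam b + 0)) := e.
  clear e; move: e2; move: ((psize lam)%:Z - S) => c; lia.
have cr : forall v : int,
    (count (fun z => (v < z)%R) (Lseq lam N) + count (fun z => (v < z)%R) [:: F mu a'; F mu b'] =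
     count (fun z => (v < z)%R) (Lseq mu N) + count (fun z => (v < z)%R) [:: F lam a; F lam b])%N.
  move=> v; rewrite -!count_cat; exact: (permP P).
have haN : (a <= N)%N := idx_bound hm hl nA1.
have hbN : (b <= N)%N := idx_bound hm hl nA2.
have ha'N : (a' <= N)%N := idx_bound hl hm nB1.
have hb'N : (b' <= N)%N := idx_bound hl hm nB2.
have nAB : F lam a <> F mu a' by move=> e; apply: nA1; rewrite e.
have [hAB|hAB] : F lam a < F mu a' \/ F mu a' < F lam a by lia.
-
  have B2A2 : F mu b' < F lam b by lia.
  have [q1 v1] := bracket pl (ltnW (leq_ltn_trans ha hab)) nB2 B2A2.
  have [q2 v2] := bracket pl ha nB2 (lt_trans B2A2 A21).
  have [r1 w1] := bracket pm ha' nA1 hAB.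
  have [r2 w2] := bracket pm ha' nA2 (lt_trans A21 hAB).
  have eq1 : q1 = b'.
    have := cr (F mu b'); rewrite (cnt_valid pl v1 hl) (cnt_self pm _ _) ?count2; try lia.
  have eq2 : q2 = b'.
    have := cr (F mu b'); rewrite (cnt_valid pl v2 hl) (cnt_self pm _ _) ?count2; try lia.
  have eq3 : r1 = a.
    have := cr (F lam a); rewrite (cnt_valid pm w1 hm) (cnt_self pl _ _) ?count2; try lia.
  have eq4 : r2 = (b - 1)%N.
    have := cr (F lam b); rewrite (cnt_valid pm w2 hm) (cnt_self pl _ _) ?count2; try lia.
  subst q1 q2 r1 r2.
  have E1 : mkS lam b b' (F mu b') = mkS mu a' a (F lam a).
    apply: swap_eq => //; apply: (set_swap (fun z => iff_trans (HA z) (or_comm _ _)) HB) => //.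
    by move=> e; apply: nA12.
  have E2 : mkS lam a b' (F mu b') = mkS mu a' (b - 1) (F lam b).
    by apply: swap_eq => //; apply: (set_swap HA HB).
  have U : forall p q y p' q' y', valid lam p q y -> valid mu p' q' y' ->
      mkS lam p q y = mkS mu p' q' y' ->
      mkS lam p q y = mkS lam b b' (F mu b') \/ mkS lam p q y = mkS lam a b' (F mu b').
    move=> p q y p' q' y' v v' E.
    have H := eq_ranges pl pm v v' E.
    have hlt := valid_lt_p pl v.
    have [[hx|hx] [hy|hy]] := config nA12 nB12 HA HB H.
    + exfalso; move: hlt; rewrite hx hy; lia.
    + by right; apply: same_xy.
    + exfalso; move: hlt; rewrite hx hy; lia.
    + by left; apply: same_xy.
  have := assemble pl pm v1 w1 v2 w2 E1 E2 _ (ltnW hab) (lexx _) (leqnn _) (ltW A21) U.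
  case; first by lia.
  move=> g1 [g1' [g2 [g2' [h1 h2 h3 [c1 c1' c2 c2'] [t1 t1' t2 t2']]]]].
  exists g1, g1', g2, g2'; split => //.
  + move: sumrel hAB c1 c1' c2 c2'; rewrite /F => sumrel hAB c1 c1' c2 c2'.
    split; lia.
  + case: v1 => _ k1 _ _; case: w1 => _ k2 _ _; case: v2 => _ k3 _ _; case: w2 => _ k4 _ _.
    split => hh.
      exfalso; move: hh hAB; rewrite /F; lia.
    rewrite t1 t1' t2 t2'; split; lia.
-
  have A2B2 : F lam b < F mu b' by lia.
  have [q1 v1] := bracket pl ha nB1 hAB.
  have [q2 v2] := bracket pl ha nB2 (lt_trans B21 hAB).
  have [r1 w1] := bracket pm (ltnW (leq_ltn_trans ha' hab')) nA2 A2B2.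
  have [r2 w2] := bracket pm ha' nA2 (lt_trans A2B2 B21).
  have eq1 : q1 = a'.
    have := cr (F mu a'); rewrite (cnt_valid pl v1 hl) (cnt_self pm _ _) ?count2; try lia.
  have eq2 : q2 = (b' - 1)%N.
    have := cr (F mu b'); rewrite (cnt_valid pl v2 hl) (cnt_self pm _ _) ?count2; try lia.
  have eq3 : r1 = b.
    have := cr (F lam b); rewrite (cnt_valid pm w1 hm) (cnt_self pl _ _) ?count2; try lia.
  have eq4 : r2 = b.
    have := cr (F lam b); rewrite (cnt_valid pm w2 hm) (cnt_self pl _ _) ?count2; try lia.
  subst q1 q2 r1 r2.
  have E1 : mkS lam a a' (F mu a') = mkS mu b' b (F lam b).
    apply: swap_eq => //; apply: (set_swap HA (fun z => iff_trans (HB z) (or_comm _ _))) => //.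
    by move=> e; apply: nB12.
  have E2 : mkS lam a (b' - 1) (F mu b') = mkS mu a' b (F lam b).
    by apply: swap_eq => //; apply: (set_swap HA HB).
  have U : forall p q y p' q' y', valid lam p q y -> valid mu p' q' y' ->
      mkS lam p q y = mkS mu p' q' y' ->
      mkS lam p q y = mkS lam a a' (F mu a') \/ mkS lam p q y = mkS lam a (b' - 1) (F mu b').
    move=> p q y p' q' y' v v' E.
    have H := eq_ranges pl pm v v' E.
    have hlt := valid_lt_p pl v.
    have [[hx|hx] [hy|hy]] := config nA12 nB12 HA HB H.
    + by left; apply: same_xy.
    + by right; apply: same_xy.
    + exfalso; move: hlt; rewrite hx hy; lia.
    + exfalso; move: hlt; rewrite hx hy; lia.
  have := assemble pl pm v1 w1 v2 w2 E1 E2 _ (leqnn _) (ltW B21) (ltnW hab') (lexx _) U.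
  case; first by lia.
  move=> g1 [g1' [g2 [g2' [h1 h2 h3 [c1 c1' c2 c2'] [t1 t1' t2 t2']]]]].
  exists g1, g1', g2, g2'; split => //.
  + move: sumrel hAB c1 c1' c2 c2'; rewrite /F => sumrel hAB c1 c1' c2 c2'.
    split; lia.
  + case: v1 => _ k1 _ _; case: w1 => _ k2 _ _; case: v2 => _ k3 _ _; case: w2 => _ k4 _ _.
    split => hh; last first.
      exfalso; move: hh hAB; rewrite /F; lia.
    rewrite t1 t1' t2 t2'; split; lia.
Qed.
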